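(* Let $k\ge 3$ and let $K_{2k-1}$ denote the simplicial complex given by the standard Gale diagram which places the vertex $i$ at $v_i$ for $i=1,\dots,2k-1$ (the boundary complex of the dual of $P_{[2k-1]}$). Let $J=(a_1,\dots,a_{2k-1})$ be a vector of positive integers. Then $K_{2k-1}(J)$ is (isomorphic to) the simplicial complex given by the standard Gale diagram with $a_i$ points at $v_i$ for each $i$; in polytope language, $P_{[2k-1]}(J)=[a_1,\dots,a_{2k-1}]$.
   Context: Let $v_1,\dots,v_{2k-1}$ be the vertices, in counterclockwise order, of a regular $(2k-1)$-gon in $\mathbb{R}^2$ centered at the origin $O$. A standard Gale diagram is a surjection $\phi$ from a finite set $V$ to $\{v_1,\dots,v_{2k-1}\}$; it determines the simplicial complex on $V$ in which $I\subseteq V$ is a face iff $O\in\operatorname{conv}\{\phi(j):j\in V\setminus I\}$. With $a_i=|\phi^{-1}(v_i)|$, the simple polytope dual to the simplicial polytope with this boundary complex is denoted $[a_1,\dots,a_{2k-1}]$, and $P_{[2k-1]}=[1,\dots,1]$ with facet $i$ corresponding to $v_i$. For a complex $K$ on $[m]$ and $J=(j_1,\dots,j_m)$ positive integers, $K(J)$ is the complex on vertices $i_1,\dots,i_{j_i}$ whose minimal non-faces are the sets $\bigcup_{r}\{(i_r)_1,\dots,(i_r)_{j_{i_r}}\}$ for minimal non-faces $\{i_1,\dots,i_s\}$ of $K$; $P(J)$ denotes the simple polytope whose dual boundary complex is $K(J)$ when $K$ is that of $P$. *)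

(* Defs.v *)
From HB Require Import structures.
From mathcomp Require Import all_boot all_order all_algebra.
From mathcomp Require Import reals trigo.
Set Implicit Arguments. Unset Strict Implicit. Unset Printing Implicit Defensive.
Import Order.TTheory GRing.Theory Num.Theory.
Local Open Scope ring_scope.

(* Vertex i (0-based, i = 0..n-1) of the regular n-gon of circumradius 1
   centered at the origin, listed counterclockwise. *)
Definition gale_pt (R : realType) (n : nat) (i : 'I_n) : R * R :=
  (cos (2 * pi * i%:R / n%:R), sin (2 * pi * i%:R / n%:R)).

Definition origin_in_conv (R : realType) (V : finType) (p : V -> R * R)
    (S : {set V}) : Prop :=
  exists w : V -> R,
    (forall j, 0 <= w j) /\
    \sum_(j in S) w j = 1 /\
    \sum_(j in S) w j * (p j).1 = 0 /\
    \sum_(j in S) w j * (p j).2 = 0.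

Definition gale_face (R : realType) (n : nat) (V : finType) (phi : V -> 'I_n)
    (I : {set V}) : Prop :=
  origin_in_conv (fun j => gale_pt R (phi j)) (~: I).

Definition min_nonface (V : finType) (face : {set V} -> Prop) (S : {set V}) : Prop :=
  ~ face S /\ (forall T : {set V}, T \proper S -> face T).

(* K(J): vertices (i, r) with r < J i; its minimal non-faces are the unions of
   the full blocks over a minimal non-face of K; so a set is a face iff it
   contains none of these unions. *)
Definition Jconstr_face (m : nat) (face : {set 'I_m} -> Prop) (J : 'I_m -> nat)
    (sigma : {set {i : 'I_m & 'I_(J i)}}) : Prop :=
  forall S : {set 'I_m}, min_nonface face S ->
    ~ ([set x : {i : 'I_m & 'I_(J i)} | tag x \in S] \subset sigma).

Definition complex_iso (V1 V2 : finType) (face1 : {set V1} -> Prop)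
    (face2 : {set V2} -> Prop) : Prop :=
  exists f : V1 -> V2, bijective f /\
    forall sigma : {set V1}, face1 sigma <-> face2 (f @: sigma).

(* Main.v *)
Require Import Defs.
From HB Require Import structures.
From mathcomp Require Import all_boot all_order all_algebra.
From mathcomp Require Import reals trigo.
From Stdlib Require Import Classical.

Module Helpers.
Import Order.TTheory GRing.Theory Num.Theory.
Local Open Scope ring_scope.

Lemma part_sum (R : realType) n (V : finType) (phi : V -> 'I_n) (A : {set V})
  (h : V -> R) :
  \sum_(v in A) h v = \sum_(i in phi @: A) \sum_(v in A | phi v == i) h v.
Proof. by apply: partition_big => v vA; apply: imset_f. Qed.

Lemma conv_image (R : realType) n (V : finType) (p : 'I_n -> R * R)
  (phi : V -> 'I_n) (A : {set V}) :
  origin_in_conv (fun j => p (phi j)) A <-> origin_in_conv p (phi @: A).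
Proof.
split.
- case=> w [w0 [s1 [sx sy]]].
  exists (fun i => \sum_(v in A | phi v == i) w v).
  have key : forall g : 'I_n -> R, \sum_(v in A) w v * g (phi v) =
     \sum_(i in phi @: A) (\sum_(v in A | phi v == i) w v) * g i.
    move=> g; rewrite (@part_sum R _ _ phi); apply: eq_bigr => i _.
    rewrite mulr_suml; apply: eq_bigr => v /andP[_ /eqP->]; done.
  split; first by move=> i; apply: sumr_ge0.
  split.
    transitivity (\sum_(i in phi @: A) (\sum_(v in A | phi v == i) w v) * 1).
      by apply: eq_bigr => i _; rewrite mulr1.
    by rewrite -(key (fun _ => 1)) -[RHS]s1; apply: eq_bigr => v _; rewrite mulr1.
  split; [rewrite -[RHS]sx | rewrite -[RHS]sy]; symmetry; [exact: (key (fun i => (p i).1)) | exact: (key (fun i => (p i).2))].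
- case=> w [w0 [s1 [sx sy]]].
  pose s i := [pick v in A | phi v == i].
  exists (fun v => if s (phi v) == Some v then w (phi v) else 0).
  have key : forall g : 'I_n -> R,
     \sum_(v in A) (if s (phi v) == Some v then w (phi v) else 0) * g (phi v) =
     \sum_(i in phi @: A) w i * g i.
    move=> g; rewrite (@part_sum R _ _ phi); apply: eq_bigr => i /imsetP[v0 v0A ->].
    have [u [uA [ui hs]]] : exists u, u \in A /\ phi u = phi v0 /\ s (phi v0) = Some u.
      rewrite /s; case: pickP => [u /andP[uA /eqP ui] | none].
        by exists u.
      by have := none v0; rewrite v0A eqxx.
    rewrite (bigD1 u) /=; last by rewrite uA ui eqxx.
    rewrite ui hs eqxx big1 ?addr0 // => v /andP[/andP[vA /eqP vi] vu].
    rewrite vi hs; case: eqP => [[e]|]; last by rewrite mul0r.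
    by rewrite e eqxx in vu.
  split; first by move=> v; case: ifP.
  split.
    transitivity (\sum_(i in phi @: A) w i * 1).
      by rewrite -key; apply: eq_bigr => v _; rewrite mulr1.
    by rewrite -[RHS]s1; apply: eq_bigr => i _; rewrite mulr1.
  split; [rewrite -[RHS]sx | rewrite -[RHS]sy]; [exact: (key (fun i => (p i).1)) | exact: (key (fun i => (p i).2))].
Qed.

Lemma conv_mono (R : realType) (V : finType) (p : V -> R * R) (A B : {set V}) :
  A \subset B -> origin_in_conv p A -> origin_in_conv p B.
Proof.
move=> AB [w [w0 [s1 [sx sy]]]].
exists (fun v => if v \in A then w v else 0).
have key : forall g : V -> R,
  \sum_(v in B) (if v \in A then w v else 0) * g v = \sum_(v in A) w v * g v.
  move=> g; rewrite big_mkcond [RHS]big_mkcond; apply: eq_bigr => v _.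
  case vA: (v \in A); last by rewrite mul0r; case: (v \in B).
  by rewrite (subsetP AB _ vA).
split; first by move=> v; case: ifP.
split.
  transitivity (\sum_(v in B) (if v \in A then w v else 0) * 1).
    by apply: eq_bigr => v _; rewrite mulr1.
  by rewrite key -[RHS]s1; apply: eq_bigr => v _; rewrite mulr1.
split; [rewrite -[RHS]sx | rewrite -[RHS]sy]; [exact: (key (fun i => (p i).1)) | exact: (key (fun i => (p i).2))].
Qed.

Lemma down_min (T : finType) (P : {set T} -> Prop) :
  (forall X Y : {set T}, Y \subset X -> P X -> P Y) ->
  forall X, P X <-> (forall S, min_nonface P S -> ~ (S \subset X)).
Proof.
move=> down X; split.
  by move=> PX S [nS _] SX; apply: nS (down _ _ SX PX).
move=> H; apply: NNPP => nPX.
suff [S [SX mS]] : exists S : {set T}, S \subset X /\ min_nonface P S by apply: H S mS SX.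
have gen : forall m (Y : {set T}), (#|Y| <= m)%N -> Y \subset X -> ~ P Y ->
    exists S : {set T}, S \subset X /\ min_nonface P S.
  elim=> [|m IH] Y hY YX nPY.
    case: (classic (forall Z : {set T}, Z \proper Y -> P Z)) => [all|ex].
      by exists Y.
    have [Z hZ] := not_all_ex_not _ _ ex; have [ZY nPZ] := imply_to_and _ _ hZ.
    by have := proper_card ZY; rewrite ltnNge (leq_trans hY).
  case: (classic (forall Z : {set T}, Z \proper Y -> P Z)) => [all|ex].
    by exists Y.
  have [Z hZ] := not_all_ex_not _ _ ex; have [ZY nPZ] := imply_to_and _ _ hZ.
  apply: (IH Z) => //.
    by rewrite -ltnS (leq_trans (proper_card ZY)).
  exact: subset_trans (proper_sub ZY) YX.
exact: (gen #|X| X (leqnn _) (subxx _) nPX).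
Qed.

End Helpers.
Import Helpers.

Theorem lemma6p4 (R : realType) (k : nat) (a : 'I_(2 * k - 1) -> nat) :
  (3 <= k)%N ->
  (forall i, (0 < a i)%N) ->
  forall (V : finType) (phi : V -> 'I_(2 * k - 1)),
    (forall i, #|[set v | phi v == i]| = a i) ->
    complex_iso (@Jconstr_face (2 * k - 1) (gale_face R (fun i : 'I_(2 * k - 1) => i)) a)
                (gale_face R phi).
Proof.
move=> _ _ V phi Hc.
set n := (2 * k - 1)%N in a phi Hc *.
pose V1 := {i : 'I_n & 'I_(a i)}.
pose f (x : V1) : V := enum_val (cast_ord (esym (Hc (tag x))) (tagged x)).
have phif : forall x, phi (f x) = tag x.
  move=> x; have := enum_valP (cast_ord (esym (Hc (tag x))) (tagged x)).
  by rewrite inE => /eqP.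
have finj : injective f.
  move=> [i r] [j s] e.
  have eij : i = j by have := phif (existT _ i r); rewrite e phif.
  subst j; by move/enum_val_inj/cast_ord_inj: e => /= ->.
have cardV : #|V| = #|{: V1}|.
  rewrite card_tagged -sum1_card (partition_big phi xpredT) //=.
  rewrite sumnE big_map big_enum /=.
  apply: eq_bigr => i _; rewrite card_ord -Hc sum1dep_card; apply: eq_card => v.
  by rewrite inE.
have fbij : bijective f by apply: inj_card_bij => //; rewrite cardV.
exists f; split => // sigma.
pose F := [set i | [forall r : 'I_(a i), (Tagged (fun i => 'I_(a i)) r : V1) \in sigma]].
have C1 : forall S : {set 'I_n}, ([set x : V1 | tag x \in S] \subset sigma) = (S \subset F).
  move=> S; apply/idP/idP => /subsetP H; apply/subsetP.
    move=> i iS; rewrite inE; apply/forallP => r; apply: H; rewrite inE; done.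
  move=> [i r]; rewrite inE /= => iS; have := H i iS.
  by rewrite inE => /forallP; apply.
have C2 : phi @: (~: (f @: sigma)) = ~: F.
  case: fbij => g fg gf.
  apply/setP => i; rewrite !inE; apply/imsetP/idP.
    case=> v; rewrite inE -[v]gf; case: (g v) => j r; rewrite phif /= => vn ->.
    apply/negP => /forallP all; move/negP: vn; apply; apply: imset_f; exact: all.
  rewrite negb_forall => /existsP[r rn].
  exists (f (Tagged (fun i => 'I_(a i)) r)); last by rewrite phif.
  by rewrite inE (mem_imset _ _ finj).
have dn : forall X Y : {set 'I_n}, Y \subset X ->
    gale_face R (fun i : 'I_n => i) X -> gale_face R (fun i : 'I_n => i) Y.
  by move=> X Y YX; apply: conv_mono; rewrite setCS.
have DM := @down_min _ (gale_face R (fun i : 'I_n => i)) dn F.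
have E1 : @Jconstr_face n (gale_face R (fun i : 'I_n => i)) a sigma <->
    (forall S, min_nonface (gale_face R (fun i : 'I_n => i)) S -> ~ S \subset F).
  by split => H S mS; move: (H S mS); rewrite C1.
have E2 : origin_in_conv (fun j => gale_pt R (phi j)) (~: (f @: sigma)) <->
    origin_in_conv (gale_pt R (n:=n)) (~: F).
  by rewrite -C2; exact: conv_image.
change (origin_in_conv (fun j => gale_pt R (phi j)) (~: (f @: sigma)) <->
  gale_face R (fun i : 'I_n => i) F) in E2.
change (@Jconstr_face n (gale_face R (fun i : 'I_n => i)) a sigma <->
  origin_in_conv (fun j => gale_pt R (phi j)) (~: (f @: sigma))).
exact: (iff_trans E1 (iff_trans (iff_sym DM) (iff_sym E2))).
Qed.
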